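(* The category $\mathbf{Top_S}$ of topological spaces and sober maps is equivalent to the opposite of the category $\mathbf{SMT_P}$ of spatial MT-algebras and proximity morphisms. The equivalence sends a space $X$ to $\mathcal P X$, a sober map $f:X\rightsquigarrow Y$ to the proximity morphism $\mathcal P Y\to\mathcal P X$ determined by $U\mapsto\{x\in X: U\in f(x)\}$ on open sets $U$ of $Y$, a spatial MT-algebra $M$ to $\mathrm{at}\,M$, and a proximity morphism $g:M\to N$ to the sober map $\mathrm{at}\,N\rightsquigarrow\mathrm{at}\,M$, $y\mapsto\{\eta_M(a): a\in\mathcal O M,\ y\le g(a)\}$.
   Context: For a space $X$, $\Omega X$ is its frame of opens, $\mathrm{pt}\,L$ the space of completely prime filters of a frame $L$ (opens $\{P: a\in P\}$), and $s X=\mathrm{pt}\,\Omega X$ the soberification with $\lambda_X:X\to sX$, $\lambda_X(x)=\{U\in\Omega X: x\in U\}$; $s$ is a functor, and $\lambda_{sZ}$ is a homeomorphism. A sober map $f:X\rightsquigarrow Y$ is a continuous map $f:X\to sY$. The composite of $f:X\rightsquigarrow Y$ and $g:Y\rightsquigarrow Z$ is $g\bullet f=\lambda_{sZ}^{-1}\circ sg\circ f$, and the identity on $X$ is $\lambda_X$; this defines $\mathbf{Top_S}$. An MT-algebra is a complete boolean algebra $M$ with $\square$ satisfying $\square1=1$, $\square(a\wedge b)=\square a\wedge\square b$, $\square a\le a$, $\square a\le\square\square a$; $\Diamond=\neg\square\neg$; open: $\square a=a$; locally closed: $a=\square b\wedge\Diamond c$; $\mathcal OM$, $\mathcal{LC}M$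 as usual. $\mathcal PX$ is the powerset of $X$ with topological interior. $\mathrm{at}\,M$ is the set of atoms with topology $\{\eta_M(u):u\in\mathcal OM\}$, $\eta_M(a)=\{x\in\mathrm{at}\,M:x\le a\}$; $M$ is spatial if $\eta_M$ is injective. A proximity morphism $f:M\to N$ is a map with (P1) $f|_{\mathcal O M}:\mathcal O M\to\mathcal O N$ a frame morphism; (P2) $f(a\wedge b)=f(a)\wedge f(b)$; (P3) $f(\bigvee S)=\bigvee f[S]$ for finite $S\subseteq\mathcal{LC}M$; (P4) $f(a)=\bigvee\{f(x):x\in\mathcal{LC}M,x\le a\}$. Proximity morphisms compose by $(g\star f)(a)=\bigvee\{g(f(x)):x\in\mathcal{LC}M_1,x\le a\}$ with identities $1_M(a)=\bigvee\{x\in\mathcal{LC}M:x\le a\}$; a proximity morphism is determined by its values on open elements. *)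

(* Defs.v *)
From Stdlib Require Import List.

Record RawSpace := { pts : Type; isOpen : (pts -> Prop) -> Prop }.
Arguments isOpen : clear implicits.

Definition is_topology (X : RawSpace) : Prop :=
  isOpen X (fun _ => True) /\
  (forall U V, isOpen X U -> isOpen X V -> isOpen X (fun x => U x /\ V x)) /\
  (forall F : (pts X -> Prop) -> Prop,
     (forall U, F U -> isOpen X U) -> isOpen X (fun x => exists U, F U /\ U x)).

(* completely prime filters of the frame Omega X (top = whole set,
   meets = intersections, joins = unions) *)
Definition cpf (X : RawSpace) (P : (pts X -> Prop) -> Prop) : Prop :=
  (forall U, P U -> isOpen X U) /\
  P (fun _ => True) /\
  (forall U V, isOpen X V -> P U -> (forall x, U x -> V x) -> P V) /\
  (forall U V, P U -> P V -> P (fun x => U x /\ V x)) /\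
  (forall F : (pts X -> Prop) -> Prop, (forall U, F U -> isOpen X U) ->
     P (fun x => exists U, F U /\ U x) -> exists U, F U /\ P U).

(* a sober map X ~> Y : a continuous map X -> sY = pt (Omega Y);
   the opens of sY are {P | U \in P}, U open in Y *)
Definition smap (X Y : RawSpace) := pts X -> (pts Y -> Prop) -> Prop.

Definition sober_map (X Y : RawSpace) (f : smap X Y) : Prop :=
  (forall x, cpf Y (f x)) /\
  (forall U, isOpen Y U -> isOpen X (fun x => f x U)).

Definition sid (X : RawSpace) : smap X X := fun x U => isOpen X U /\ U x.

(* g . f = lambda_{sZ}^{-1} o s g o f, unfolded:
   (g . f)(x) = { W in Omega Z | { y | W in g y } in f x } *)
Definition scomp (X Y Z : RawSpace) (g : smap Y Z) (f : smap X Y) : smap X Z :=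
  fun x W => isOpen Z W /\ f x (fun y => g y W).

Record RawMT := {
  car : Type;
  le : car -> car -> Prop;
  sup : (car -> Prop) -> car;
  cmpl : car -> car;
  box : car -> car }.
Arguments le : clear implicits.
Arguments sup : clear implicits.
Arguments cmpl : clear implicits.
Arguments box : clear implicits.

Definition top (M : RawMT) : car M := sup M (fun _ => True).
Definition bot (M : RawMT) : car M := sup M (fun _ => False).
Definition join (M : RawMT) (a b : car M) : car M := sup M (fun x => x = a \/ x = b).
Definition meet (M : RawMT) (a b : car M) : car M :=
  sup M (fun x => le M x a /\ le M x b).

Definition is_CBA (M : RawMT) : Prop :=
  (forall a, le M a a) /\
  (forall a b c, le M a b -> le M b c -> le M a c) /\
  (forall a b, le M a b -> le M b a -> a = b) /\
  (forall S a, S a -> le M a (sup M S)) /\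
  (forall S b, (forall a, S a -> le M a b) -> le M (sup M S) b) /\
  (forall a b c, meet M a (join M b c) = join M (meet M a b) (meet M a c)) /\
  (forall a, meet M a (cmpl M a) = bot M /\ join M a (cmpl M a) = top M).

Definition is_MT (M : RawMT) : Prop :=
  is_CBA M /\
  box M (top M) = top M /\
  (forall a b, box M (meet M a b) = meet M (box M a) (box M b)) /\
  (forall a, le M (box M a) a) /\
  (forall a, le M (box M a) (box M (box M a))).

Definition diamond (M : RawMT) (a : car M) : car M := cmpl M (box M (cmpl M a)).
Definition is_open (M : RawMT) (a : car M) : Prop := box M a = a.
Definition lc (M : RawMT) (a : car M) : Prop :=
  exists b c, a = meet M (box M b) (diamond M c).

Definition PX (X : RawSpace) : RawMT := {|
  car := pts X -> Prop;
  le := fun A B => forall x, A x -> B x;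
  sup := fun S x => exists A, S A /\ A x;
  cmpl := fun A x => ~ A x;
  box := fun A x => exists U, isOpen X U /\ (forall y, U y -> A y) /\ U x |}.

Definition atom (M : RawMT) (x : car M) : Prop :=
  x <> bot M /\ forall y, le M y x -> y = bot M \/ y = x.

Definition atoms (M : RawMT) := {x : car M | atom M x}.

Definition eta (M : RawMT) (a : car M) : atoms M -> Prop :=
  fun x => le M (proj1_sig x) a.

Definition atM (M : RawMT) : RawSpace := {|
  pts := atoms M;
  isOpen := fun V => exists u, is_open M u /\ V = eta M u |}.

Definition spatial (M : RawMT) : Prop := forall a b, eta M a = eta M b -> a = b.

Definition proximity (M N : RawMT) (f : car M -> car N) : Prop :=
  (* (P1) f restricted to O M is a frame morphism O M -> O N *)
  (forall u, is_open M u -> is_open N (f u)) /\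
  f (top M) = top N /\
  (forall u v, is_open M u -> is_open M v -> f (meet M u v) = meet N (f u) (f v)) /\
  (forall S, (forall u, S u -> is_open M u) ->
     f (sup M S) = sup N (fun y => exists u, S u /\ y = f u)) /\
  (* (P2) *)
  (forall a b, f (meet M a b) = meet N (f a) (f b)) /\
  (* (P3) finite joins of locally closed elements *)
  (forall l : list (car M), (forall x, In x l -> lc M x) ->
     f (sup M (fun x => In x l)) = sup N (fun y => exists x, In x l /\ y = f x)) /\
  (* (P4) *)
  (forall a, f a = sup N (fun y => exists x, lc M x /\ le M x a /\ y = f x)).

Definition pcomp (M1 M2 M3 : RawMT) (g : car M2 -> car M3) (f : car M1 -> car M2)
  : car M1 -> car M3 :=
  fun a => sup M3 (fun y => exists x, lc M1 x /\ le M1 x a /\ y = g (f x)).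

Definition pid (M : RawMT) : car M -> car M :=
  fun a => sup M (fun x => lc M x /\ le M x a).

Definition Gmor (M N : RawMT) (g : car M -> car N) : smap (atM N) (atM M) :=
  fun y V => exists a, is_open M a /\ V = eta M a /\ le N (proj1_sig y) (g a).

(* Main.v *)
Require Import Defs.
From Stdlib Require Import List Classical FunctionalExtensionality PropExtensionality ProofIrrelevance.

Ltac pext := apply propositional_extensionality.
Ltac fext x := apply functional_extensionality; intro x.


Lemma cba_refl M : is_CBA M -> forall a, le M a a.
Proof. intros H; apply H. Qed.
Lemma cba_trans M : is_CBA M -> forall a b c, le M a b -> le M b c -> le M a c.
Proof. intros H; apply H. Qed.
Lemma cba_anti M : is_CBA M -> forall a b, le M a b -> le M b a -> a = b.
Proof. intros H; apply H. Qed.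
Lemma cba_ub M : is_CBA M -> forall S a, S a -> le M a (sup M S).
Proof. intros H; apply H. Qed.
Lemma cba_lub M : is_CBA M -> forall S b, (forall a, S a -> le M a b) -> le M (sup M S) b.
Proof. intros H; apply H. Qed.
Lemma cba_distr M : is_CBA M -> forall a b c, meet M a (join M b c) = join M (meet M a b) (meet M a c).
Proof. intros H; apply H. Qed.
Lemma cba_compl1 M : is_CBA M -> forall a, meet M a (cmpl M a) = bot M.
Proof. intros H a; apply H. Qed.
Lemma cba_compl2 M : is_CBA M -> forall a, join M a (cmpl M a) = top M.
Proof. intros H a; apply H. Qed.

Lemma meet_l M : is_CBA M -> forall a b, le M (meet M a b) a.
Proof. intros H a b; apply (cba_lub M H); intros x [h _]; auto. Qed.
Lemma meet_r M : is_CBA M -> forall a b, le M (meet M a b) b.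
Proof. intros H a b; apply (cba_lub M H); intros x [_ h]; auto. Qed.
Lemma meet_glb M : is_CBA M -> forall a b c, le M c a -> le M c b -> le M c (meet M a b).
Proof. intros H a b c h1 h2; apply (cba_ub M H); auto. Qed.
Lemma join_l M : is_CBA M -> forall a b, le M a (join M a b).
Proof. intros H a b; apply (cba_ub M H); auto. Qed.
Lemma join_r M : is_CBA M -> forall a b, le M b (join M a b).
Proof. intros H a b; apply (cba_ub M H); auto. Qed.
Lemma join_lub M : is_CBA M -> forall a b c, le M a c -> le M b c -> le M (join M a b) c.
Proof. intros H a b c h1 h2; apply (cba_lub M H); intros x [->| ->]; auto. Qed.
Lemma top_max M : is_CBA M -> forall a, le M a (top M).
Proof. intros H a; apply (cba_ub M H); auto. Qed.
Lemma bot_min M : is_CBA M -> forall a, le M (bot M) a.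
Proof. intros H a; apply (cba_lub M H); intros x []. Qed.
Lemma meet_eq M : is_CBA M -> forall a b, le M a b -> meet M a b = a.
Proof.
  intros H a b h; apply (cba_anti M H). apply meet_l; auto.
  apply meet_glb; auto; apply (cba_refl M H).
Qed.
Lemma meet_le M : is_CBA M -> forall a b, meet M a b = a -> le M a b.
Proof. intros H a b h; rewrite <- h; apply meet_r; auto. Qed.

Lemma atom_sup M : is_CBA M -> forall y S, atom M y -> le M y (sup M S) ->
  exists s, S s /\ le M y s.
Proof.
  intros H y S [hb ha] hy. apply NNPP; intro hn.
  assert (hs : forall s, S s -> le M s (cmpl M y)).
  { intros s hs.
    assert (e : meet M y s = bot M).
    { destruct (ha (meet M y s) (meet_l M H _ _)) as [e|e]; auto.
      exfalso; apply hn; exists s; split; auto. rewrite <- e; apply meet_r; auto. }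
    assert (e2 : s = meet M s (join M y (cmpl M y))).
    { rewrite cba_compl2; auto. symmetry; apply meet_eq; auto; apply top_max; auto. }
    rewrite e2, cba_distr; auto. apply join_lub; auto.
    - replace (meet M s y) with (bot M). apply bot_min; auto.
      rewrite <- e; apply (cba_anti M H); apply meet_glb; auto;
      first [apply meet_l; auto | apply meet_r; auto].
    - apply meet_r; auto. }
  assert (h1 : le M y (cmpl M y)).
  { eapply (cba_trans M H); [exact hy|]. apply cba_lub; auto. }
  apply hb. rewrite <- (cba_compl1 M H y). symmetry; apply meet_eq; auto.
Qed.

Lemma atom_cmpl M : is_CBA M -> forall y a, atom M y -> (le M y (cmpl M a) <-> ~ le M y a).
Proof.
  intros H y a [hb ha]; split.
  - intros h1 h2. apply hb. apply (cba_anti M H); [|apply bot_min; auto].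
    rewrite <- (cba_compl1 M H a). apply meet_glb; auto.
  - intros hn.
    assert (e : meet M y a = bot M).
    { destruct (ha (meet M y a) (meet_l M H _ _)) as [e|e]; auto.
      exfalso; apply hn; rewrite <- e; apply meet_r; auto. }
    assert (e2 : y = meet M y (join M a (cmpl M a))).
    { rewrite cba_compl2; auto. symmetry; apply meet_eq; auto; apply top_max; auto. }
    rewrite e2, cba_distr, e; auto. apply join_lub; auto. apply bot_min; auto.
    apply meet_r; auto.
Qed.

Lemma atom_meet M : is_CBA M -> forall y a b, (le M y (meet M a b) <-> le M y a /\ le M y b).
Proof.
  intros H y a b; split.
  - intros h; split; eapply (cba_trans M H); eauto; [apply meet_l|apply meet_r]; auto.
  - intros [h1 h2]; apply meet_glb; auto.
Qed.

Lemma atom_join M : is_CBA M -> forall y a b, atom M y -> (le M y (join M a b) <-> le M y a \/ le M y b).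
Proof.
  intros H y a b hy; split.
  - intros h; destruct (atom_sup M H y _ hy h) as [s [[->| ->] hs]]; auto.
  - intros [h|h]; eapply (cba_trans M H); eauto; [apply join_l|apply join_r]; auto.
Qed.

Lemma atom_bot M : is_CBA M -> forall y, atom M y -> ~ le M y (bot M).
Proof.
  intros H y [hb _] h; apply hb; apply (cba_anti M H); auto; apply bot_min; auto.
Qed.

Lemma atom_le M : is_CBA M -> forall y x, atom M y -> atom M x -> le M y x -> y = x.
Proof.
  intros H y x hy [_ hx] h. destruct (hx y h) as [e|e]; auto.
  destruct hy as [hb _]; contradiction.
Qed.

Lemma eta_ext M (a b : car M) : (forall y, atom M y -> (le M y a <-> le M y b)) -> eta M a = eta M b.
Proof.
  intros h; fext x; pext; destruct x as [x hx]; unfold eta; simpl; apply h; auto.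
Qed.

Lemma sp_le M : is_CBA M -> spatial M -> forall a b,
  (forall y, atom M y -> le M y a -> le M y b) -> le M a b.
Proof.
  intros H Hs a b h. apply meet_le; auto. apply Hs. apply eta_ext.
  intros y hy; rewrite atom_meet; auto; split; [intros [? ?]; auto| intros; split; auto].
Qed.

Lemma sp_eq M : is_CBA M -> spatial M -> forall a b,
  (forall y, atom M y -> (le M y a <-> le M y b)) -> a = b.
Proof.
  intros H Hs a b h; apply (cba_anti M H); apply sp_le; auto; intros y hy; apply h; auto.
Qed.

Lemma le_atoms M : is_CBA M -> forall a b, le M a b -> forall y, le M y a -> le M y b.
Proof. intros H a b h y h'; eapply (cba_trans M H); eauto. Qed.

Lemma mt_cba M : is_MT M -> is_CBA M.
Proof. intros H; apply H. Qed.
Lemma box_top M : is_MT M -> box M (top M) = top M.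
Proof. intros H; apply H. Qed.
Lemma box_meet M : is_MT M -> forall a b, box M (meet M a b) = meet M (box M a) (box M b).
Proof. intros H; apply H. Qed.
Lemma box_le M : is_MT M -> forall a, le M (box M a) a.
Proof. intros H; apply H. Qed.
Lemma box_4 M : is_MT M -> forall a, le M (box M a) (box M (box M a)).
Proof. intros H; apply H. Qed.

Lemma box_mono M : is_MT M -> forall a b, le M a b -> le M (box M a) (box M b).
Proof.
  intros H a b h. pose proof (mt_cba M H) as C.
  rewrite <- (meet_eq M C a b h), box_meet; auto. apply meet_r; auto.
Qed.
Lemma box_idem M : is_MT M -> forall a, box M (box M a) = box M a.
Proof. intros H a; apply (cba_anti M (mt_cba M H)); [apply box_le|apply box_4]; auto. Qed.
Lemma open_box M : is_MT M -> forall a, is_open M (box M a).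
Proof. intros H a; apply box_idem; auto. Qed.
Lemma open_le_box M : is_MT M -> forall u a, is_open M u -> le M u a -> le M u (box M a).
Proof. intros H u a hu h; rewrite <- hu; apply box_mono; auto. Qed.
Lemma open_top M : is_MT M -> is_open M (top M).
Proof. intros H; apply box_top; auto. Qed.
Lemma open_meet M : is_MT M -> forall u v, is_open M u -> is_open M v -> is_open M (meet M u v).
Proof. intros H u v hu hv; unfold is_open; rewrite box_meet, hu, hv; auto. Qed.
Lemma open_sup M : is_MT M -> forall S, (forall u, S u -> is_open M u) -> is_open M (sup M S).
Proof.
  intros H S hS. pose proof (mt_cba M H) as C. apply (cba_anti M C). apply box_le; auto.
  apply cba_lub; auto. intros a ha. apply open_le_box; auto. apply cba_ub; auto.
Qed.
Lemma open_join M : is_MT M -> forall u v, is_open M u -> is_open M v -> is_open M (join M u v).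
Proof. intros H u v hu hv; apply open_sup; auto; intros w [->| ->]; auto. Qed.
Lemma open_bot M : is_MT M -> is_open M (bot M).
Proof. intros H; apply open_sup; auto; intros w []. Qed.

Lemma atom_box M : is_MT M -> forall y a, atom M y ->
  (le M y (box M a) <-> exists u, is_open M u /\ le M u a /\ le M y u).
Proof.
  intros H y a hy; pose proof (mt_cba M H) as C; split.
  - intros h; exists (box M a); split; [apply open_box|split; [apply box_le|]]; auto.
  - intros [u [hu [h1 h2]]]. eapply (cba_trans M C); eauto. apply open_le_box; auto.
Qed.

Lemma cmpl_cmpl M : is_MT M -> spatial M -> forall a, cmpl M (cmpl M a) = a.
Proof.
  intros H Hs a; pose proof (mt_cba M H) as C. apply sp_eq; auto. intros y hy.
  rewrite !atom_cmpl; auto. split; [apply NNPP| auto].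
Qed.

Lemma cmpl_bot M : is_MT M -> spatial M -> cmpl M (bot M) = top M.
Proof.
  intros H Hs; pose proof (mt_cba M H) as C. apply sp_eq; auto. intros y hy.
  rewrite !atom_cmpl; auto. split; intros; [apply top_max; auto| apply atom_bot; auto].
Qed.

Lemma lc_iff M : is_MT M -> spatial M -> forall x,
  lc M x <-> exists u v, is_open M u /\ is_open M v /\ x = meet M u (cmpl M v).
Proof.
  intros H Hs x; split.
  - intros [b [c ->]]. exists (box M b), (box M (cmpl M c)).
    split; [apply open_box; auto|split;[apply open_box; auto|reflexivity]].
  - intros [u [v [hu [hv ->]]]]. exists u, (cmpl M v). unfold diamond.
    rewrite (cmpl_cmpl M H Hs v), hv, hu. reflexivity.
Qed.

Lemma open_lc M : is_MT M -> spatial M -> forall u, is_open M u -> lc M u.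
Proof.
  intros H Hs u hu. apply lc_iff; auto. exists u, (bot M).
  split; [auto|split; [apply open_bot; auto|]].
  rewrite cmpl_bot; auto. symmetry; apply meet_eq; auto. apply mt_cba; auto. apply top_max; apply mt_cba; auto.
Qed.

Lemma lc_meet M : is_MT M -> spatial M -> forall x x', lc M x -> lc M x' -> lc M (meet M x x').
Proof.
  intros H Hs x x' h h'; pose proof (mt_cba M H) as C.
  apply lc_iff in h; auto; apply lc_iff in h'; auto.
  destruct h as [u [v [hu [hv ->]]]]; destruct h' as [u' [v' [hu' [hv' ->]]]].
  apply lc_iff; auto. exists (meet M u u'), (join M v v').
  split; [apply open_meet; auto|split; [apply open_join; auto|]].
  apply sp_eq; auto; intros y hy. repeat first [rewrite atom_meet; auto | rewrite atom_cmpl; auto | rewrite atom_join; auto].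
  tauto.
Qed.

Lemma atom_pid M : is_MT M -> forall y a, atom M y ->
  (le M y (pid M a) <-> exists x, lc M x /\ le M x a /\ le M y x).
Proof.
  intros H y a hy; pose proof (mt_cba M H) as C; split.
  - intros h; destruct (atom_sup M C y _ hy h) as [x [[h1 h2] h3]]; eauto.
  - intros [x [h1 [h2 h3]]]. eapply (cba_trans M C); eauto. apply cba_ub; auto.
Qed.

Lemma pid_lc M : is_MT M -> spatial M -> forall x, lc M x -> pid M x = x.
Proof.
  intros H Hs x hx; pose proof (mt_cba M H) as C. apply (cba_anti M C).
  apply cba_lub; auto; intros a [_ h]; auto.
  apply cba_ub; auto; split; auto; apply cba_refl; auto.
Qed.

Lemma pid_le M : is_MT M -> forall a, le M (pid M a) a.
Proof. intros H a; apply cba_lub; [apply mt_cba; auto|]; intros x [_ h]; auto. Qed.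

Lemma px_meet X a b : meet (PX X) a b = fun x => a x /\ b x.
Proof.
  unfold meet; simpl. fext x; pext; split.
  - intros [A [[h1 h2] h]]; auto.
  - intros h; exists (fun z => a z /\ b z); split; auto; split; intros z [? ?]; auto.
Qed.
Lemma px_join X a b : join (PX X) a b = fun x => a x \/ b x.
Proof.
  unfold join; simpl. fext x; pext; split.
  - intros [A [[->| ->] h]]; auto.
  - intros [h|h]; eauto.
Qed.
Lemma px_top X : top (PX X) = fun _ => True.
Proof. unfold top; simpl; fext x; pext; split; auto; intros _; exists (fun _ => True); auto. Qed.
Lemma px_bot X : bot (PX X) = fun _ => False.
Proof. unfold bot; simpl; fext x; pext; split; [intros [A [[] _]]|intros []]. Qed.

Lemma px_topo_union X : is_topology X -> forall (G : (pts X -> Prop) -> Prop),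
  (forall U, G U -> isOpen X U) -> isOpen X (fun x => exists U, G U /\ U x).
Proof. intros H; apply H. Qed.

Lemma px_open X : is_topology X -> forall A, is_open (PX X) A <-> isOpen X A.
Proof.
  intros H A; unfold is_open; simpl; split.
  - intros e. rewrite <- e.
    replace (fun x => exists U, isOpen X U /\ (forall y, U y -> A y) /\ U x)
      with (fun x => exists U, (isOpen X U /\ (forall y, U y -> A y)) /\ U x).
    + apply px_topo_union; auto. intros U [h _]; auto.
    + fext x; pext; firstorder.
  - intros h; fext x; pext; split.
    + intros [U [_ [h1 h2]]]; auto.
    + intros hx; exists A; auto.
Qed.

Lemma px_MT X : is_topology X -> is_MT (PX X).
Proof.
  intros H. destruct H as [Ht [Hm Hu]].
  split; [|split; [|split; [|split]]].
  - split; [|split; [|split; [|split; [|split; [|split]]]]].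
    + simpl; auto.
    + simpl; auto.
    + simpl; intros a b h1 h2; fext x; pext; split; auto.
    + simpl; intros S a h x hx; eauto.
    + simpl; intros S b h x [A [hA hx]]; eapply h; eauto.
    + intros a b c; rewrite !px_meet, !px_join; fext x; pext; tauto.
    + intros a; rewrite px_meet, px_join, px_top, px_bot; simpl; split; fext x; pext; tauto.
  - rewrite px_top; simpl; fext x; pext; split; auto. intros _; exists (fun _ => True); auto.
  - intros a b; rewrite !px_meet; simpl; fext x; pext; split.
    + intros [U [hU [h1 h2]]]; split; exists U; split; auto; split; auto; intros y hy; apply h1; auto.
    + intros [[U [hU [h1 h2]]] [V [hV [h3 h4]]]]. exists (fun z => U z /\ V z).
      split; auto. split; auto. intros y [? ?]; split; auto.
  - intros a x [U [_ [h1 h2]]]; simpl; auto.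
  - intros a x [U [hU [h1 h2]]]; simpl. exists U; split; auto; split; auto.
    intros y hy; exists U; auto.
Qed.

Lemma px_atom X A : atom (PX X) A <-> exists x, A = fun z => z = x.
Proof.
  split.
  - intros [hb ha]. rewrite px_bot in hb.
    destruct (classic (exists x, A x)) as [[x hx]|hn].
    + exists x. destruct (ha (fun z => z = x)) as [e|e].
      * simpl; intros z ->; auto.
      * exfalso. rewrite px_bot in e. assert (h := f_equal (fun f => f x) e); simpl in h.
        rewrite <- h; auto.
      * auto.
    + exfalso; apply hb; fext z; pext; split; [intro hz; apply hn; eauto|intros []].
  - intros [x ->]. unfold atom; rewrite px_bot. split.
    + intro e; assert (h := f_equal (fun f => f x) e); simpl in h; rewrite <- h; auto.
    + intros y hy. simpl in hy. destruct (classic (y x)) as [hx|hx].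
      * right; fext z; pext; split; [apply hy|intros ->; auto].
      * left; fext z; pext; split; [intros hz; assert (z = x) by auto; subst; auto|intros []].
Qed.

Lemma px_single_atom X (x : pts X) : atom (PX X) (fun z => z = x).
Proof. apply px_atom; eauto. Qed.

Definition patom X (x : pts X) : atoms (PX X) := exist _ (fun z => z = x) (px_single_atom X x).

Lemma eta_patom X a x : eta (PX X) a (patom X x) <-> a x.
Proof. unfold eta; simpl; split; [intros h; apply h; auto|intros h z ->; auto]. Qed.

Lemma patom_surj X (y : atoms (PX X)) : exists x, y = patom X x.
Proof.
  destruct y as [A hA]. destruct (proj1 (px_atom X A) hA) as [x ->].
  exists x; unfold patom; f_equal; apply proof_irrelevance.
Qed.

Lemma px_spatial X : spatial (PX X).
Proof.
  intros a b e; fext x; pext.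
  rewrite <- !eta_patom; rewrite e; tauto.
Qed.

Lemma px_lc X : is_topology X -> forall L, lc (PX X) L <->
  exists U V, isOpen X U /\ isOpen X V /\ L = fun x => U x /\ ~ V x.
Proof.
  intros H L. rewrite (lc_iff (PX X) (px_MT X H) (px_spatial X)).
  split; intros [U [V [h1 [h2 e]]]]; exists U, V; rewrite !px_open in *; auto;
    rewrite px_meet in *; auto.
Qed.

Lemma px_pid X : is_topology X -> forall A, pid (PX X) A =
  fun x => exists U V, isOpen X U /\ isOpen X V /\ (forall z, U z -> ~ V z -> A z) /\ U x /\ ~ V x.
Proof.
  intros H A; unfold pid; simpl; fext x; pext; split.
  - intros [L [[hL hLA] hx]]. apply px_lc in hL; auto. destruct hL as [U [V [hU [hV ->]]]].
    exists U, V; firstorder.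
  - intros [U [V [hU [hV [h [hx1 hx2]]]]]]. exists (fun x => U x /\ ~ V x).
    split; [split|]; auto. apply px_lc; auto; eauto 6. intros z [? ?]; auto.
Qed.

Lemma eta_le M : is_MT M -> spatial M -> forall a b,
  le M a b <-> (forall y, eta M a y -> eta M b y).
Proof.
  intros H Hs a b; pose proof (mt_cba M H) as C; split.
  - intros h [y hy]; unfold eta; simpl; intros h'; eapply (cba_trans M C); eauto.
  - intros h; apply sp_le; auto; intros y hy h'. exact (h (exist _ y hy) h').
Qed.

Lemma eta_top M : is_MT M -> eta M (top M) = fun _ => True.
Proof. intros H; fext y; pext; split; auto; intros _; apply top_max, mt_cba; auto. Qed.

Lemma eta_meet M : is_MT M -> forall a b, eta M (meet M a b) = fun y => eta M a y /\ eta M b y.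
Proof. intros H a b; fext y; pext; unfold eta; apply atom_meet, mt_cba; auto. Qed.

Lemma eta_sup M : is_MT M -> forall S, eta M (sup M S) = fun y => exists s, S s /\ eta M s y.
Proof.
  intros H S; pose proof (mt_cba M H) as C; fext y; pext; unfold eta; split.
  - intros h; destruct y as [y hy]; simpl in *; apply atom_sup; auto.
  - intros [s [h1 h2]]; eapply (cba_trans M C); eauto; apply cba_ub; auto.
Qed.

Lemma eta_cmpl M : is_MT M -> forall a, eta M (cmpl M a) = fun y => ~ eta M a y.
Proof.
  intros H a; fext y; pext; unfold eta; destruct y as [y hy]; simpl; apply atom_cmpl; auto; apply mt_cba; auto.
Qed.

Lemma union_eta M : is_MT M -> forall F : (atoms M -> Prop) -> Prop,
  (forall U, F U -> isOpen (atM M) U) ->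
  (fun x => exists U, F U /\ U x) = eta M (sup M (fun w => is_open M w /\ F (eta M w))).
Proof.
  intros H F hF; rewrite eta_sup; auto; fext y; pext; split.
  - intros [U [hU hy]]. destruct (hF U hU) as [u [hu ->]]. exists u; auto.
  - intros [s [[_ h1] h2]]; eauto.
Qed.

Lemma atM_topology M : is_MT M -> spatial M -> is_topology (atM M).
Proof.
  intros H Hs; split; [|split].
  - exists (top M); split; [apply open_top; auto|rewrite eta_top; auto].
  - intros U V [u [hu ->]] [v [hv ->]]. exists (meet M u v); split.
    apply open_meet; auto. rewrite eta_meet; auto.
  - intros F hF. simpl. rewrite union_eta; auto. eexists; split; [|reflexivity].
    apply open_sup; auto. intros w [h _]; auto.
Qed.

Lemma prox_open M N g : proximity M N g -> forall u, is_open M u -> is_open N (g u).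
Proof. intros H; apply H. Qed.
Lemma prox_top M N g : proximity M N g -> g (top M) = top N.
Proof. intros H; apply H. Qed.
Lemma prox_meet_open M N g : proximity M N g -> forall u v, is_open M u -> is_open M v ->
  g (meet M u v) = meet N (g u) (g v).
Proof. intros H; apply H. Qed.
Lemma prox_sup_open M N g : proximity M N g -> forall S, (forall u, S u -> is_open M u) ->
  g (sup M S) = sup N (fun y => exists u, S u /\ y = g u).
Proof. intros H; apply H. Qed.
Lemma prox_meet M N g : proximity M N g -> forall a b, g (meet M a b) = meet N (g a) (g b).
Proof. intros H; apply H. Qed.
Lemma prox_fin M N g : proximity M N g -> forall l : list (car M), (forall x, In x l -> lc M x) ->
  g (sup M (fun x => In x l)) = sup N (fun y => exists x, In x l /\ y = g x).
Proof. intros H; apply H. Qed.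
Lemma prox_P4 M N g : proximity M N g ->
  forall a, g a = sup N (fun y => exists x, lc M x /\ le M x a /\ y = g x).
Proof. intros H; apply H. Qed.

Lemma prox_mono M N g : is_MT M -> is_MT N -> proximity M N g -> forall a b, le M a b -> le N (g a) (g b).
Proof.
  intros HM HN Hg a b h. rewrite <- (meet_eq M (mt_cba M HM) a b h), prox_meet; eauto.
  apply meet_r, mt_cba; auto.
Qed.

Lemma prox_bot M N g : is_MT N -> proximity M N g -> g (bot M) = bot N.
Proof.
  intros HN Hg. pose proof (prox_fin M N g Hg nil (fun x h => match h with end)) as e.
  change (g (bot M) = sup N (fun y => exists x, In x nil /\ y = g x)) in e. rewrite e.
  unfold bot; f_equal; fext y; pext; split; [intros [x [[] _]]|intros []].
Qed.

Lemma prox_pid M N g : is_MT M -> is_MT N -> proximity M N g -> forall a, g (pid M a) = g a.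
Proof.
  intros HM HN Hg a. pose proof (mt_cba N HN) as CN. pose proof (mt_cba M HM) as CM.
  apply (cba_anti N CN).
  - apply prox_mono; auto. apply pid_le; auto.
  - rewrite (prox_P4 M N g Hg a). apply cba_lub; auto. intros y [x [hx [hxa ->]]].
    apply prox_mono; auto. apply cba_ub; auto.
Qed.

Lemma le_eta_iff M (y : atoms M) a : eta M a y <-> le M (proj1_sig y) a.
Proof. reflexivity. Qed.

Lemma Gmor_eta M N g : is_MT M -> spatial M -> is_MT N -> proximity M N g ->
  forall u y, is_open M u -> (Gmor M N g y (eta M u) <-> eta N (g u) y).
Proof.
  intros HM Hs HN Hg u y hu; unfold Gmor; split.
  - intros [a [ha [e h]]]. apply Hs in e; subst; auto.
  - intros h; exists u; auto.
Qed.

Lemma Gmor_open_eq M N g : is_MT M -> spatial M -> is_MT N -> proximity M N g ->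
  forall u, is_open M u -> (fun y => Gmor M N g y (eta M u)) = eta N (g u).
Proof. intros; fext y; pext; apply Gmor_eta; auto. Qed.

Lemma Gmor_sober M N g : is_MT M -> spatial M -> is_MT N -> spatial N ->
  proximity M N g -> sober_map (atM N) (atM M) (Gmor M N g).
Proof.
  intros HM Hs HN HsN Hg. pose proof (mt_cba N HN) as CN. pose proof (mt_cba M HM) as CM.
  split.
  - intros y. split; [|split; [|split; [|split]]].
    + intros U [a [ha [-> _]]]; exists a; auto.
    + exists (top M); split; [apply open_top; auto|split; [rewrite eta_top; auto|]].
      rewrite prox_top; auto; apply top_max; auto.
    + intros U V [v [hv ->]] [a [ha [-> h]]] hUV. exists v; split; auto; split; auto.
      eapply (cba_trans N CN); eauto. apply prox_mono; auto. apply eta_le; auto.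
    + intros U V [a [ha [-> h1]]] [b [hb [-> h2]]]. exists (meet M a b).
      split; [apply open_meet; auto|split; [rewrite eta_meet; auto|]].
      rewrite prox_meet_open; auto. apply meet_glb; auto.
    + intros F hF [a [ha [e h]]]. simpl in e. rewrite union_eta in e; auto. apply Hs in e. subst a.
      rewrite prox_sup_open in h; auto; [|intros w [? _]; auto].
      destruct y as [y hy]; simpl in h.
      destruct (atom_sup N CN y _ hy h) as [z [[w [[hw hFw] ->]] hz]].
      exists (eta M w); split; auto. exists w; auto.
  - intros U [u [hu ->]]. exists (g u); split. apply prox_open; auto.
    apply Gmor_open_eq; auto.
Qed.

Lemma Gmor_id M : is_MT M -> spatial M -> Gmor M M (pid M) = sid (atM M).
Proof.
  intros H Hs. fext y; fext V; pext; unfold Gmor, sid; split.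
  - intros [a [ha [-> h]]]. split; [exists a; auto|].
    rewrite pid_lc in h; auto. apply open_lc; auto.
  - intros [[a [ha ->]] h]. exists a; split; auto; split; auto.
    rewrite pid_lc; auto. apply open_lc; auto.
Qed.

Lemma pcomp_open M1 M2 M3 f g : is_MT M1 -> spatial M1 -> is_MT M2 -> is_MT M3 ->
  proximity M1 M2 f -> proximity M2 M3 g -> forall a, is_open M1 a ->
  pcomp M1 M2 M3 g f a = g (f a).
Proof.
  intros H1 Hs1 H2 H3 Hf Hg a ha. pose proof (mt_cba M3 H3) as C3.
  apply (cba_anti M3 C3).
  - apply cba_lub; auto; intros y [x [hx [hxa ->]]]. apply prox_mono; auto; apply prox_mono; auto.
  - apply cba_ub; auto. exists a; split; [apply open_lc; auto|split; auto]. apply cba_refl, mt_cba; auto.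
Qed.

Lemma Gmor_comp M1 M2 M3 (f : car M1 -> car M2) (g : car M2 -> car M3) :
  is_MT M1 -> spatial M1 -> is_MT M2 -> spatial M2 -> is_MT M3 -> spatial M3 ->
  proximity M1 M2 f -> proximity M2 M3 g ->
  Gmor M1 M3 (pcomp M1 M2 M3 g f) = scomp (atM M3) (atM M2) (atM M1) (Gmor M1 M2 f) (Gmor M2 M3 g).
Proof.
  intros H1 Hs1 H2 Hs2 H3 Hs3 Hf Hg. fext y; fext W; pext; unfold scomp; split.
  - intros [a [ha [-> h]]]. split; [exists a; auto|].
    rewrite Gmor_open_eq; auto. apply Gmor_eta; auto. apply prox_open; auto.
    rewrite pcomp_open in h; auto.
  - intros [[a [ha ->]] h]. exists a; split; auto; split; auto.
    rewrite Gmor_open_eq in h; auto. apply Gmor_eta in h; auto; [|apply prox_open; auto].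
    rewrite pcomp_open; auto.
Qed.

Definition Fm (X Y : RawSpace) (f : smap X Y) (A : pts Y -> Prop) : pts X -> Prop :=
  fun x => exists U V, isOpen Y U /\ isOpen Y V /\ (forall z, U z -> ~ V z -> A z) /\ f x U /\ ~ f x V.

Lemma topo_top Y : is_topology Y -> isOpen Y (fun _ => True).
Proof. intros H; apply H. Qed.
Lemma topo_meet Y : is_topology Y -> forall U V, isOpen Y U -> isOpen Y V -> isOpen Y (fun x => U x /\ V x).
Proof. intros H; apply H. Qed.
Lemma topo_union Y : is_topology Y -> forall U V, isOpen Y U -> isOpen Y V -> isOpen Y (fun x => U x \/ V x).
Proof.
  intros H U V hU hV.
  replace (fun x => U x \/ V x) with (fun x => exists W, (W = U \/ W = V) /\ W x).
  apply px_topo_union; auto; intros W [->| ->]; auto.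
  fext x; pext; split; [intros [W [[->| ->] h]]; auto|intros [h|h]; eauto].
Qed.
Lemma topo_empty Y : is_topology Y -> isOpen Y (fun _ => False).
Proof.
  intros H. replace (fun _ : pts Y => False) with (fun x => exists W : pts Y -> Prop, False /\ W x).
  apply px_topo_union; auto; intros W [].
  fext x; pext; split; [intros [W [[] _]]|intros []].
Qed.

Lemma cpf_open Y P : cpf Y P -> forall U, P U -> isOpen Y U.
Proof. intros H; apply H. Qed.
Lemma cpf_top Y P : cpf Y P -> P (fun _ => True).
Proof. intros H; apply H. Qed.
Lemma cpf_up Y P : cpf Y P -> forall U V, isOpen Y V -> P U -> (forall x, U x -> V x) -> P V.
Proof. intros H; apply H. Qed.
Lemma cpf_meet Y P : cpf Y P -> forall U V, P U -> P V -> P (fun x => U x /\ V x).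
Proof. intros H; apply H. Qed.
Lemma cpf_cp Y P : cpf Y P -> forall F : (pts Y -> Prop) -> Prop, (forall U, F U -> isOpen Y U) ->
     P (fun x => exists U, F U /\ U x) -> exists U, F U /\ P U.
Proof. intros H; apply H. Qed.
Lemma cpf_prime Y P : is_topology Y -> cpf Y P -> forall U V, isOpen Y U -> isOpen Y V ->
  P (fun x => U x \/ V x) -> P U \/ P V.
Proof.
  intros HY H U V hU hV h.
  destruct (cpf_cp Y P H (fun W => W = U \/ W = V)) as [W [[->| ->] hW]]; auto.
  intros W [->| ->]; auto.
  eapply cpf_up; eauto. apply px_topo_union; auto. intros W [->| ->]; auto.
  intros x [hx|hx]; eauto.
Qed.

Lemma cpf_empty Y P : is_topology Y -> cpf Y P -> ~ P (fun _ => False).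
Proof.
  intros HY H h. destruct (cpf_cp Y P H (fun _ => False)) as [W [[] _]].
  intros W []. eapply cpf_up; eauto. apply px_topo_union; auto; intros W [].
Qed.

Lemma cpf_iff Y P : cpf Y P -> forall U V, isOpen Y U -> isOpen Y V -> (forall x, U x <-> V x) -> (P U <-> P V).
Proof. intros H U V hU hV e; split; intros h; eapply cpf_up; eauto; firstorder. Qed.


Lemma Fm_lc X Y f : is_topology Y -> sober_map X Y f -> forall U V, isOpen Y U -> isOpen Y V ->
  Fm X Y f (fun z => U z /\ ~ V z) = fun x => f x U /\ ~ f x V.
Proof.
  intros HY [Hc Hct] U V hU hV. fext x; pext; split.
  - intros [U' [V' [hU' [hV' [hsub [h1 h2]]]]]]. pose proof (Hc x) as P. split.
    + assert (h3 : f x (fun z => U z \/ V' z)).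
      { eapply cpf_up; eauto. apply topo_union; auto.
        intros z hz. destruct (classic (V' z)) as [hv|hv]; auto. left; apply (hsub z hz hv). }
      apply cpf_prime in h3; auto. destruct h3; tauto.
    + intros hv. apply h2. apply (cpf_up Y (f x) P (fun z => U' z /\ V z) V'); auto.
      apply cpf_meet; auto.
      intros z [hz1 hz2]. apply NNPP; intro hn. apply (hsub z hz1 hn); auto.
  - intros [h1 h2]. exists U, V; auto.
Qed.

Lemma Fm_open X Y f : is_topology Y -> sober_map X Y f -> forall U, isOpen Y U ->
  Fm X Y f U = fun x => f x U.
Proof.
  intros HY Hf U hU.
  replace U with (fun z => U z /\ ~ (fun _ : pts Y => False) z) at 1.
  rewrite Fm_lc; auto. fext x; pext; split; [intros [h _]; auto|intros h; split; auto].
  apply cpf_empty; auto; apply Hf. apply topo_empty; auto.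
  fext z; pext; tauto.
Qed.

Lemma Fm_mono X Y f : forall A B : pts Y -> Prop, (forall z, A z -> B z) -> forall x, Fm X Y f A x -> Fm X Y f B x.
Proof. intros A B h x [U [V [h1 [h2 [h3 h4]]]]]; exists U, V; repeat split; auto; tauto. Qed.

Lemma Fm_key X Y f : is_topology Y -> sober_map X Y f -> forall x (l : list (pts Y -> Prop)),
  (forall L, In L l -> lc (PX Y) L) -> forall U V, isOpen Y U -> isOpen Y V ->
  f x U -> ~ f x V -> (forall z, U z -> ~ V z -> exists L, In L l /\ L z) ->
  exists L, In L l /\ Fm X Y f L x.
Proof.
  intros HY Hf x l. pose proof (proj1 Hf x) as P. induction l as [|L l IH]; intros hl U V hU hV h1 h2 hc.
  - exfalso; apply h2. eapply cpf_up; eauto. intros z hz. apply NNPP; intros hn.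
    destruct (hc z hz hn) as [L [[] _]].
  - destruct (proj1 (px_lc Y HY L) (hl L (or_introl eq_refl))) as [Ui [Vi [hUi [hVi ->]]]].
    destruct (classic (f x Ui /\ ~ f x Vi)) as [hi|hi].
    + exists (fun z => Ui z /\ ~ Vi z); split; [left; auto|]. rewrite Fm_lc; auto.
    + assert (hl' : forall L, In L l -> lc (PX Y) L) by (intros; apply hl; right; auto).
      destruct (classic (f x Ui)) as [hui|hui].
      * assert (hvi : f x Vi) by tauto.
        destruct (IH hl' (fun z => U z /\ Vi z) V) as [L' [hL' hx]]; auto.
        apply topo_meet; auto. apply cpf_meet; auto.
        intros z [hz1 hz2] hz3. destruct (hc z hz1 hz3) as [L' [[<-|hL'] hz]]; eauto.
        destruct hz; contradiction.
        exists L'; split; auto; right; auto.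
      * destruct (IH hl' U (fun z => V z \/ Ui z)) as [L' [hL' hx]]; auto.
        apply topo_union; auto. intros h; apply cpf_prime in h; auto; tauto.
        intros z hz1 hz3. destruct (hc z hz1 (fun h => hz3 (or_introl h))) as [L' [[<-|hL'] hz]]; eauto.
        destruct hz; exfalso; auto.
        exists L'; split; auto; right; auto.
Qed.

Lemma Fm_prox X Y f : is_topology X -> is_topology Y -> sober_map X Y f ->
  proximity (PX Y) (PX X) (Fm X Y f).
Proof.
  intros HX HY Hf. pose proof (proj1 Hf) as P.
  split; [|split; [|split; [|split; [|split; [|split]]]]].
  - intros u hu. apply px_open in hu; auto. apply px_open; auto. rewrite Fm_open; auto. apply Hf; auto.
  - rewrite !px_top, Fm_open; auto. fext x; pext; split; auto. intros _; apply cpf_top; auto.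
    apply topo_top; auto.
  - intros u v hu hv. apply px_open in hu; auto; apply px_open in hv; auto.
    rewrite !px_meet, !Fm_open; auto. fext x; pext; split.
    + intros h; split; eapply cpf_up; eauto; intros z [? ?]; auto.
    + intros [h1 h2]; apply cpf_meet; auto.
    + apply topo_meet; auto.
  - intros S hS. assert (hS' : forall u, S u -> isOpen Y u) by (intros; apply px_open; auto).
    simpl. rewrite Fm_open; auto; [|apply px_topo_union; auto].
    fext x; pext; split.
    + intros h. destruct (cpf_cp Y _ (P x) S hS' h) as [U [hU hx]].
      exists (Fm X Y f U); split; [exists U; auto|]. rewrite Fm_open; auto.
    + intros [B [[u [hu ->]] hx]]. rewrite Fm_open in hx; auto.
      apply (cpf_up Y _ (P x) u); [apply px_topo_union; auto| exact hx| intros z hz; eauto].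
  - intros a b. rewrite !px_meet. fext x; pext; split.
    + intros h; split; (eapply Fm_mono; [|exact h]); intros z [? ?]; auto.
    + intros [[U1 [V1 [hU1 [hV1 [s1 [a1 b1]]]]]] [U2 [V2 [hU2 [hV2 [s2 [a2 b2]]]]]]].
      exists (fun z => U1 z /\ U2 z), (fun z => V1 z \/ V2 z).
      split; [apply topo_meet; auto|split; [apply topo_union; auto|split; [|split]]].
      * intros z [? ?] hz; split; auto.
      * apply cpf_meet; auto.
      * intros h; apply cpf_prime in h; auto; tauto.
  - intros l hl. simpl. fext x; pext; split.
    + intros [U [V [hU [hV [hs [h1 h2]]]]]].
      destruct (Fm_key X Y f HY Hf x l hl U V hU hV h1 h2) as [L [hL hx]].
      intros z hz1 hz2; destruct (hs z hz1 hz2) as [L [? ?]]; eauto.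
      exists (Fm X Y f L); split; eauto.
    + intros [B [[L [hL ->]] hx]]. eapply Fm_mono; [|exact hx]. intros z hz; eauto.
  - intros a. simpl. fext x; pext; split.
    + intros [U [V [hU [hV [hs [h1 h2]]]]]]. exists (Fm X Y f (fun z => U z /\ ~ V z)).
      split. exists (fun z => U z /\ ~ V z). split; [apply px_lc; eauto 7|split; auto].
      intros z [? ?]; auto.
      all: try (exists U, V; repeat split; auto; fail).
    + intros [B [[L [hL [hLa ->]]] hx]]. eapply Fm_mono; [|exact hx]. exact hLa.
Qed.

Lemma Fm_sid X : is_topology X -> Fm X X (sid X) = pid (PX X).
Proof.
  intros H. fext A. rewrite px_pid; auto. fext x; pext; unfold Fm, sid; split.
  - intros [U [V [hU [hV [hs [[_ h1] h2]]]]]]. exists U, V; repeat split; auto.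
  - intros [U [V [hU [hV [hs [h1 h2]]]]]]. exists U, V; repeat split; auto. intros [_ ?]; auto.
Qed.

Lemma Fm_comp X Y Z f g : is_topology X -> is_topology Y -> is_topology Z ->
  sober_map X Y f -> sober_map Y Z g ->
  Fm X Z (scomp X Y Z g f) = pcomp (PX Z) (PX Y) (PX X) (Fm X Y f) (Fm Y Z g).
Proof.
  intros HX HY HZ Hf Hg. fext A. unfold pcomp; simpl. fext x; pext; split.
  - intros [U [V [hU [hV [hs [[_ h1] h2]]]]]].
    exists (Fm X Y f (Fm Y Z g (fun z => U z /\ ~ V z))). split.
    + exists (fun z => U z /\ ~ V z); split; [apply px_lc; eauto 7|split; auto].
      intros z [? ?]; auto.
    + rewrite Fm_lc; auto. rewrite Fm_lc; auto. split; auto.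
      intros h; apply h2; split; auto. apply Hg; auto. apply Hg; auto.
  - intros [B [[L [hL [hLA ->]]] hx]]. apply px_lc in hL; auto.
    destruct hL as [U [V [hU [hV ->]]]]. rewrite Fm_lc in hx; auto. rewrite Fm_lc in hx; auto.
    destruct hx as [h1 h2]. exists U, V; repeat split; auto. intros [_ h]; auto.
    apply Hg; auto. apply Hg; auto.
Qed.

Definition alpha (X : RawSpace) : smap X (atM (PX X)) :=
  fun x V => isOpen (atM (PX X)) V /\ V (patom X x).
Definition alpha' (X : RawSpace) : smap (atM (PX X)) X :=
  fun a U => isOpen X U /\ eta (PX X) U a.

Lemma atPX_open X : is_topology X -> forall V,
  isOpen (atM (PX X)) V <-> exists U, isOpen X U /\ V = eta (PX X) U.
Proof.
  intros H V; simpl; split; intros [U [h e]]; exists U; split; auto; apply px_open; auto.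
Qed.

Lemma alpha_on X : is_topology X -> forall U x, isOpen X U ->
  (alpha X x (eta (PX X) U) <-> U x).
Proof.
  intros H U x hU; unfold alpha; rewrite eta_patom; split; [tauto|].
  intros h; split; auto; apply atPX_open; eauto.
Qed.

Lemma alpha_sober X : is_topology X -> sober_map X (atM (PX X)) (alpha X).
Proof.
  intros H. pose proof (px_MT X H) as HM. split.
  - intros x; split; [|split; [|split; [|split]]].
    + intros U [h _]; auto.
    + split. apply atM_topology; auto. apply px_spatial. exact I.
    + intros U V hV [_ h] hUV; split; auto.
    + intros U V [hU h1] [hV h2]; split; auto. apply atM_topology; auto. apply px_spatial.
    + intros F hF [_ [U [hU hx]]]. exists U; split; auto; split; auto.
  - intros V hV. destruct (proj1 (atPX_open X H V) hV) as [U [hU ->]].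
    replace (fun x => alpha X x (eta (PX X) U)) with U; auto.
    fext x; pext; rewrite alpha_on; tauto.
Qed.

Lemma alpha'_patom X : is_topology X -> forall x U, alpha' X (patom X x) U <-> isOpen X U /\ U x.
Proof. intros H x U; unfold alpha'; rewrite eta_patom; tauto. Qed.

Lemma alpha'_sober X : is_topology X -> sober_map (atM (PX X)) X (alpha' X).
Proof.
  intros H. split.
  - intros a. destruct (patom_surj X a) as [x ->].
    split; [|split; [|split; [|split]]].
    + intros U h; apply alpha'_patom in h; tauto.
    + apply alpha'_patom; auto. split; auto; apply topo_top; auto.
    + intros U V hV h hUV. apply alpha'_patom in h; auto. apply alpha'_patom; auto. firstorder.
    + intros U V h1 h2. apply alpha'_patom in h1; auto; apply alpha'_patom in h2; auto.
      apply alpha'_patom; auto. split; [apply topo_meet|]; tauto.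
    + intros F hF h. apply alpha'_patom in h; auto. destruct h as [_ [U [hU hx]]].
      exists U; split; auto; apply alpha'_patom; auto.
  - intros U hU. apply atPX_open; auto. exists U; split; auto.
    fext a; pext; unfold alpha'; tauto.
Qed.

Lemma unit_iso1 X : is_topology X -> scomp X (atM (PX X)) X (alpha' X) (alpha X) = sid X.
Proof.
  intros H. fext x; fext W; pext; unfold scomp, sid; split.
  - intros [hW h]. split; auto.
    replace (fun a => alpha' X a W) with (eta (PX X) W) in h.
    apply alpha_on in h; auto. fext a; pext; unfold alpha'; tauto.
  - intros [hW h]. split; auto.
    replace (fun a => alpha' X a W) with (eta (PX X) W).
    apply alpha_on; auto. fext a; pext; unfold alpha'; tauto.
Qed.

Lemma unit_iso2 X : is_topology X ->
  scomp (atM (PX X)) X (atM (PX X)) (alpha X) (alpha' X) = sid (atM (PX X)).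
Proof.
  intros H. fext a; fext V; pext; unfold scomp, sid; split.
  - intros [hV h]. split; auto. destruct (proj1 (atPX_open X H V) hV) as [U [hU ->]].
    replace (fun x => alpha X x (eta (PX X) U)) with U in h. exact (proj2 h).
    fext x; pext; rewrite alpha_on; tauto.
  - intros [hV h]. split; auto. destruct (proj1 (atPX_open X H V) hV) as [U [hU ->]].
    replace (fun x => alpha X x (eta (PX X) U)) with U. split; auto.
    fext x; pext; rewrite alpha_on; tauto.
Qed.

Lemma unit_nat X Y f : is_topology X -> is_topology Y -> sober_map X Y f ->
  scomp X (atM (PX X)) (atM (PX Y)) (Gmor (PX Y) (PX X) (Fm X Y f)) (alpha X)
  = scomp X Y (atM (PX Y)) (alpha Y) f.
Proof.
  intros HX HY Hf. pose proof (Fm_prox X Y f HX HY Hf) as Hp.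
  fext x; fext W; pext; unfold scomp; split.
  - intros [hW h]; split; auto. destruct (proj1 (atPX_open Y HY W) hW) as [U [hU ->]].
    assert (hUo : is_open (PX Y) U) by (apply px_open; auto).
    rewrite (Gmor_open_eq (PX Y) (PX X) _ (px_MT Y HY) (px_spatial Y) (px_MT X HX) Hp U hUo) in h.
    rewrite Fm_open in h; auto. apply alpha_on in h; auto; [|apply Hf; auto].
    replace (fun y => alpha Y y (eta (PX Y) U)) with U; auto.
    fext y; pext; rewrite alpha_on; tauto.
  - intros [hW h]; split; auto. destruct (proj1 (atPX_open Y HY W) hW) as [U [hU ->]].
    assert (hUo : is_open (PX Y) U) by (apply px_open; auto).
    rewrite (Gmor_open_eq (PX Y) (PX X) _ (px_MT Y HY) (px_spatial Y) (px_MT X HX) Hp U hUo).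
    rewrite Fm_open; auto. apply alpha_on; auto; [apply Hf; auto|].
    replace (fun y => alpha Y y (eta (PX Y) U)) with U in h; auto.
    fext y; pext; rewrite alpha_on; tauto.
Qed.

Definition inv (M : RawMT) (A : atoms M -> Prop) : car M :=
  sup M (fun x => exists h : atom M x, A (exist _ x h)).
Definition theta (M : RawMT) (a : car M) : car (PX (atM M)) := eta M (pid M a).
Definition theta' (M : RawMT) (A : car (PX (atM M))) : car M := pid M (inv M A).

Lemma eta_inv M : is_MT M -> forall A, eta M (inv M A) = A.
Proof.
  intros H A. pose proof (mt_cba M H) as C. fext y; pext. destruct y as [y hy]; unfold eta, inv; simpl; split.
  - intros h. destruct (atom_sup M C y _ hy h) as [x [[hx hA] hyx]].
    assert (e := atom_le M C y x hy hx hyx). subst x.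
    replace hy with hx by apply proof_irrelevance; auto.
  - intros h. apply cba_ub; auto. exists hy; auto.
Qed.

Lemma inv_eta M : is_MT M -> spatial M -> forall a, inv M (eta M a) = a.
Proof. intros H Hs a; apply Hs; rewrite eta_inv; auto. Qed.

Lemma N_open M : is_MT M -> spatial M -> forall A,
  is_open (PX (atM M)) A <-> exists u, is_open M u /\ A = eta M u.
Proof. intros H Hs A; rewrite px_open; [reflexivity|apply atM_topology; auto]. Qed.

Lemma lc_eta M : is_MT M -> spatial M -> forall x, lc M x <-> lc (PX (atM M)) (eta M x).
Proof.
  intros H Hs x. pose proof (atM_topology M H Hs) as T. rewrite (px_lc _ T). split.
  - intros hx; apply lc_iff in hx; auto. destruct hx as [u [v [hu [hv ->]]]].
    exists (eta M u), (eta M v). split; [exists u; auto|split; [exists v; auto|]].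
    rewrite eta_meet, eta_cmpl; auto.
  - intros [U [V [[u [hu ->]] [[v [hv ->]] e]]]]. apply lc_iff; auto.
    exists u, v; split; auto; split; auto. apply Hs. rewrite e, eta_meet, eta_cmpl; auto.
Qed.

Lemma eta_pid M : is_MT M -> spatial M -> forall a, eta M (pid M a) = pid (PX (atM M)) (eta M a).
Proof.
  intros H Hs a. pose proof (mt_cba M H) as C. fext y; pext. unfold pid at 2; simpl.
  destruct y as [y hy]. unfold eta at 1; simpl. rewrite atom_pid; auto. split.
  - intros [x [hx [hxa hyx]]]. exists (eta M x). split; [split|].
    + apply (proj1 (lc_eta M H Hs x) hx).
    + apply (proj1 (eta_le M H Hs x a) hxa).
    + exact hyx.
  - intros [L [[hL hLa] hLy]]. exists (inv M L). rewrite <- (eta_inv M H L) in hL, hLa, hLy.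
    split; [apply (proj2 (lc_eta M H Hs _) hL)|split; [apply (proj2 (eta_le M H Hs _ _) hLa)|exact hLy]].
Qed.

Lemma eta_theta' M : is_MT M -> spatial M -> forall A, eta M (theta' M A) = pid (PX (atM M)) A.
Proof. intros H Hs A; unfold theta'; rewrite eta_pid, eta_inv; auto. Qed.

Lemma theta'_eta M : is_MT M -> spatial M -> forall a, theta' M (eta M a) = pid M a.
Proof. intros H Hs a; unfold theta'; rewrite inv_eta; auto. Qed.

Lemma theta_lc M : is_MT M -> spatial M -> forall x, lc M x -> theta M x = eta M x.
Proof. intros H Hs x hx; unfold theta; rewrite pid_lc; auto. Qed.

Lemma pid_meet M : is_MT M -> spatial M -> forall a b, pid M (meet M a b) = meet M (pid M a) (pid M b).
Proof.
  intros H Hs a b. pose proof (mt_cba M H) as C. apply sp_eq; auto. intros y hy.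
  rewrite atom_meet, !atom_pid; auto. split.
  - intros [x [hx [hxab hyx]]].
    split; exists x; (split; [auto|split; [|auto]]).
    + eapply (cba_trans M C); [exact hxab|apply meet_l; auto].
    + eapply (cba_trans M C); [exact hxab|apply meet_r; auto].
  - intros [[x1 [h1 [h1a h1y]]] [x2 [h2 [h2b h2y]]]]. exists (meet M x1 x2).
    split; [apply lc_meet; auto|split].
    + apply meet_glb; auto; eapply (cba_trans M C); eauto; [apply meet_l|apply meet_r]; auto.
    + apply meet_glb; auto.
Qed.

Lemma pid_sup_lc M : is_MT M -> spatial M -> forall S, (forall x, S x -> lc M x) -> pid M (sup M S) = sup M S.
Proof.
  intros H Hs S hS. pose proof (mt_cba M H) as C. apply (cba_anti M C). apply pid_le; auto.
  apply sp_le; auto. intros y hy h. destruct (atom_sup M C y S hy h) as [x [hx hyx]].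
  apply atom_pid; auto. exists x; split; auto; split; auto. apply cba_ub; auto.
Qed.

Lemma theta_prox M : is_MT M -> spatial M -> proximity M (PX (atM M)) (theta M).
Proof.
  intros H Hs. pose proof (mt_cba M H) as C.
  assert (to : forall u, is_open M u -> theta M u = eta M u).
  { intros u hu; apply theta_lc; auto; apply open_lc; auto. }
  split; [|split; [|split; [|split; [|split; [|split]]]]].
  - intros u hu; rewrite to; auto. apply N_open; eauto.
  - rewrite to, eta_top, px_top; auto. apply open_top; auto.
  - intros u v hu hv. rewrite !to, px_meet, eta_meet; auto. apply open_meet; auto.
  - intros S hS. rewrite to, eta_sup; auto; [|apply open_sup; auto]. simpl.
    fext y; pext; split.
    + intros [s [hs h]]; exists (theta M s); split; [exists s; auto|rewrite to; auto].
    + intros [B [[u [hu ->]] h]]; rewrite to in h; eauto.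
  - intros a b. unfold theta. rewrite pid_meet, eta_meet, px_meet; auto.
  - intros l hl. unfold theta at 1. rewrite pid_sup_lc, eta_sup; auto. simpl.
    fext y; pext; split.
    + intros [s [hs h]]; exists (theta M s); split; [exists s; auto|rewrite theta_lc; auto].
    + intros [B [[u [hu ->]] h]]; rewrite theta_lc in h; eauto.
  - intros a. unfold theta at 1. simpl. fext y; pext. destruct y as [y hy]. unfold eta at 1; simpl.
    rewrite atom_pid; auto. split.
    + intros [x [hx [hxa hyx]]]. exists (theta M x). split; [exists x; auto|rewrite theta_lc; auto].
    + intros [B [[x [hx [hxa ->]]] h]]. rewrite theta_lc in h; auto. exists x; auto.
Qed.

Lemma theta'_open M : is_MT M -> spatial M -> forall u, is_open M u -> theta' M (eta M u) = u.
Proof. intros H Hs u hu; rewrite theta'_eta, pid_lc; auto; apply open_lc; auto. Qed.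

Lemma theta'_prox M : is_MT M -> spatial M -> proximity (PX (atM M)) M (theta' M).
Proof.
  intros H Hs. pose proof (mt_cba M H) as C. pose proof (atM_topology M H Hs) as T.
  pose proof (px_MT _ T) as HN. pose proof (px_spatial (atM M)) as HsN.
  split; [|split; [|split; [|split; [|split; [|split]]]]].
  - intros A hA. apply N_open in hA; auto. destruct hA as [u [hu ->]]. rewrite theta'_open; auto.
  - replace (top (PX (atM M))) with (eta M (top M)).
    rewrite theta'_open; auto. apply open_top; auto. rewrite px_top, eta_top; auto.
  - intros A B hA hB. apply N_open in hA; auto; apply N_open in hB; auto.
    destruct hA as [u [hu ->]]; destruct hB as [v [hv ->]].
    replace (meet (PX (atM M)) (eta M u) (eta M v)) with (eta M (meet M u v)).
    rewrite !theta'_open; auto. apply open_meet; auto. rewrite px_meet, eta_meet; auto.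
  - intros S hS. assert (hS' : forall U, S U -> isOpen (atM M) U).
    { intros U hU; apply (px_open _ T); auto. }
    change (sup (PX (atM M)) S) with (fun x : atoms M => exists U, S U /\ U x).
    rewrite union_eta; auto. rewrite theta'_open; auto; [|apply open_sup; auto; intros w [? _]; auto].
    f_equal. fext w; pext; split.
    + intros [hw hSw]. exists (eta M w); split; auto. rewrite theta'_open; auto.
    + intros [U [hU ->]]. destruct (hS' U hU) as [u [hu ->]]. rewrite theta'_open; auto.
  - intros A B. apply Hs. rewrite eta_theta', pid_meet, eta_meet, !eta_theta', px_meet; auto.
  - intros l hl. apply Hs. rewrite eta_theta', pid_sup_lc, eta_sup; auto. simpl.
    fext y; pext; split.
    + intros [A [hA h]]. exists (theta' M A). split; [exists A; auto|].
      rewrite eta_theta', pid_lc; auto.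
    + intros [s [[A [hA ->]] h]]. rewrite eta_theta', pid_lc in h; eauto.
  - intros A. apply Hs. rewrite eta_theta', eta_sup; auto. unfold pid at 1; simpl.
    fext y; pext; split.
    + intros [L [[hL hLA] h]]. exists (theta' M L). split; [exists L; auto|].
      rewrite eta_theta', pid_lc; auto.
    + intros [s [[L [hL [hLA ->]]] h]]. rewrite eta_theta', pid_lc in h; eauto.
Qed.

Lemma counit_iso1 M : is_MT M -> spatial M ->
  pcomp M (PX (atM M)) M (theta' M) (theta M) = pid M.
Proof.
  intros H Hs. fext a. unfold pcomp, pid. f_equal. fext y; pext; split.
  - intros [x [hx [hxa ->]]]. rewrite theta_lc, theta'_eta, pid_lc; auto.
  - intros [hy hya]. exists y; split; auto; split; auto. rewrite theta_lc, theta'_eta, pid_lc; auto.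
Qed.

Lemma counit_iso2 M : is_MT M -> spatial M ->
  pcomp (PX (atM M)) M (PX (atM M)) (theta M) (theta' M) = pid (PX (atM M)).
Proof.
  intros H Hs.
  assert (k : forall L, lc (PX (atM M)) L -> theta M (theta' M L) = L).
  { intros L hL. assert (hi : lc M (inv M L)) by (apply lc_eta; auto; rewrite eta_inv; auto).
    unfold theta'. rewrite (pid_lc M H Hs _ hi), theta_lc, eta_inv; auto. }
  fext A. unfold pcomp, pid. f_equal. fext B; pext; split.
  - intros [L [hL [hLA ->]]]. rewrite k; auto.
  - intros [hB hBA]. exists B; split; auto; split; auto. rewrite k; auto.
Qed.

Lemma prox_lc_val M N g : is_MT M -> spatial M -> is_MT N -> spatial N -> proximity M N g ->
  forall u v, is_open M u -> is_open M v -> g (meet M u (cmpl M v)) = meet N (g u) (cmpl N (g v)).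
Proof.
  intros HM HsM HN HsN Hg u v hu hv. pose proof (mt_cba M HM) as CM. pose proof (mt_cba N HN) as CN.
  set (x := meet M u (cmpl M v)).
  assert (hx : lc M x) by (apply lc_iff; eauto).
  apply sp_eq; auto. intros y hy. rewrite atom_meet, atom_cmpl; auto. split.
  - intros h. split.
    + eapply (cba_trans N CN); eauto. apply prox_mono; auto. apply meet_l; auto.
    + intros h2. apply (atom_bot N CN y hy).
      rewrite <- (prox_bot M N g HN Hg).
      replace (bot M) with (meet M x v).
      rewrite prox_meet; auto. apply meet_glb; auto.
      apply sp_eq; auto. intros z hz. unfold x. rewrite !atom_meet, atom_cmpl; auto.
      split; [tauto|intros h3; exfalso; apply (atom_bot M CM z hz h3)].
  - intros [h1 h2].
    assert (e : le M u (sup M (fun w => In w (x :: v :: nil)))).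
    { apply sp_le; auto. intros z hz hzu. destruct (classic (le M z v)) as [hzv|hzv].
      - eapply (cba_trans M CM); eauto. apply cba_ub; auto. simpl; auto.
      - eapply (cba_trans M CM); [|apply cba_ub; auto; simpl; left; reflexivity].
        unfold x; apply meet_glb; auto. apply atom_cmpl; auto. }
    apply (prox_mono M N g HM HN Hg) in e.
    rewrite prox_fin in e; auto.
    2: { intros w [<-|[<-|[]]]; auto. apply open_lc; auto. }
    pose proof (cba_trans N CN _ _ _ h1 e) as h3.
    destruct (atom_sup N CN y _ hy h3) as [z [[w [hw ->]] hz]].
    destruct hw as [<-|[<-|[]]]; auto. contradiction.
Qed.

Lemma counit_nat M N g : is_MT M -> spatial M -> is_MT N -> spatial N -> proximity M N g ->
  pcomp M (PX (atM M)) (PX (atM N)) (Fm (atM N) (atM M) (Gmor M N g)) (theta M)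
  = pcomp M N (PX (atM N)) (theta N) g.
Proof.
  intros HM HsM HN HsN Hg. fext a. unfold pcomp. f_equal. fext B; pext.
  assert (k : forall x, lc M x -> Fm (atM N) (atM M) (Gmor M N g) (theta M x) = theta N (g x)).
  { intros x hx. rewrite theta_lc; auto. apply lc_iff in hx; auto. destruct hx as [u [v [hu [hv ->]]]].
    rewrite prox_lc_val; auto. rewrite theta_lc; auto.
    2: { apply lc_iff; auto. exists (g u), (g v); split; [apply prox_open; auto|split; [apply prox_open; auto|auto]]. }
    rewrite eta_meet, eta_cmpl; auto.
    rewrite (eta_meet N HN), (eta_cmpl N HN).
    transitivity (fun x => Gmor M N g x (eta M u) /\ ~ Gmor M N g x (eta M v)).
    { apply (Fm_lc (atM N) (atM M) (Gmor M N g) (atM_topology M HM HsM) (Gmor_sober M N g HM HsM HN HsN Hg)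
       (eta M u) (eta M v)); [exists u; auto | exists v; auto]. }
    fext y; pext. rewrite !Gmor_eta; auto. reflexivity. }
  split.
  - intros [x [hx [hxa ->]]]. exists x; split; auto; split; auto.
  - intros [x [hx [hxa ->]]]. exists x; split; auto; split; auto. symmetry; apply k; auto.
Qed.
Theorem theorem6p16 :
  (* the functor P : Top_S -> SMT_P^op on objects is well defined *)
  (forall X : RawSpace, is_topology X -> is_MT (PX X) /\ spatial (PX X)) /\
  (* the functor at : SMT_P^op -> Top_S on objects is well defined *)
  (forall M : RawMT, is_MT M -> spatial M -> is_topology (atM M)) /\
  (* at on morphisms is well defined and functorial *)
  (forall M N (g : car M -> car N), is_MT M -> spatial M -> is_MT N -> spatial N ->
     proximity M N g -> sober_map (atM N) (atM M) (Gmor M N g)) /\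
  (forall M, is_MT M -> spatial M -> Gmor M M (pid M) = sid (atM M)) /\
  (forall M1 M2 M3 (f : car M1 -> car M2) (g : car M2 -> car M3),
     is_MT M1 -> spatial M1 -> is_MT M2 -> spatial M2 -> is_MT M3 -> spatial M3 ->
     proximity M1 M2 f -> proximity M2 M3 g ->
     Gmor M1 M3 (pcomp M1 M2 M3 g f)
     = scomp (atM M3) (atM M2) (atM M1) (Gmor M1 M2 f) (Gmor M2 M3 g)) /\
  (* P on morphisms: f |-> the proximity morphism determined on opens by
     U |-> {x | U in f x}; it is functorial, and together with at forms an
     equivalence (natural isomorphisms Id ~ at o P and P o at ~ Id) *)
  exists Fmor : forall X Y : RawSpace, smap X Y -> car (PX Y) -> car (PX X),
    (forall X Y (f : smap X Y), is_topology X -> is_topology Y -> sober_map X Y f ->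
       proximity (PX Y) (PX X) (Fmor X Y f) /\
       (forall U, isOpen Y U -> Fmor X Y f U = (fun x => f x U))) /\
    (forall X, is_topology X -> Fmor X X (sid X) = pid (PX X)) /\
    (forall X Y Z (f : smap X Y) (g : smap Y Z),
       is_topology X -> is_topology Y -> is_topology Z ->
       sober_map X Y f -> sober_map Y Z g ->
       Fmor X Z (scomp X Y Z g f)
       = pcomp (PX Z) (PX Y) (PX X) (Fmor X Y f) (Fmor Y Z g)) /\
    (* unit: natural isomorphism X ~ at (P X) in Top_S *)
    (exists (alpha : forall X, smap X (atM (PX X)))
            (alpha' : forall X, smap (atM (PX X)) X),
       (forall X, is_topology X ->
          sober_map X (atM (PX X)) (alpha X) /\
          sober_map (atM (PX X)) X (alpha' X) /\
          scomp X (atM (PX X)) X (alpha' X) (alpha X) = sid X /\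
          scomp (atM (PX X)) X (atM (PX X)) (alpha X) (alpha' X) = sid (atM (PX X))) /\
       (forall X Y (f : smap X Y), is_topology X -> is_topology Y -> sober_map X Y f ->
          scomp X (atM (PX X)) (atM (PX Y))
            (Gmor (PX Y) (PX X) (Fmor X Y f)) (alpha X)
          = scomp X Y (atM (PX Y)) (alpha Y) f)) /\
    (* counit: natural isomorphism M ~ P (at M) in SMT_P *)
    (exists (theta : forall M, car M -> car (PX (atM M)))
            (theta' : forall M, car (PX (atM M)) -> car M),
       (forall M, is_MT M -> spatial M ->
          proximity M (PX (atM M)) (theta M) /\
          proximity (PX (atM M)) M (theta' M) /\
          pcomp M (PX (atM M)) M (theta' M) (theta M) = pid M /\
          pcomp (PX (atM M)) M (PX (atM M)) (theta M) (theta' M) = pid (PX (atM M))) /\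
       (forall M N (g : car M -> car N), is_MT M -> spatial M -> is_MT N -> spatial N ->
          proximity M N g ->
          pcomp M (PX (atM M)) (PX (atM N))
            (Fmor (atM N) (atM M) (Gmor M N g)) (theta M)
          = pcomp M N (PX (atM N)) (theta N) g)).
Proof.
  split. { intros X H; split; [apply px_MT|apply px_spatial]; auto. }
  split. { intros M H Hs; apply atM_topology; auto. }
  split. { intros; apply Gmor_sober; auto. }
  split. { intros; apply Gmor_id; auto. }
  split. { intros; apply Gmor_comp; auto. }
  exists Fm. split.
  { intros X Y f HX HY Hf; split; [apply Fm_prox; auto| intros; apply Fm_open; auto]. }
  split. { intros; apply Fm_sid; auto. }
  split. { intros; apply Fm_comp; auto. }
  split.
  { exists alpha, alpha'. split.
    - intros X H; split; [apply alpha_sober; auto|split; [apply alpha'_sober; auto|split; [apply unit_iso1; auto|apply unit_iso2; auto]]].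
    - intros; apply unit_nat; auto. }
  { exists theta, theta'. split.
    - intros M H Hs; split; [apply theta_prox; auto|split; [apply theta'_prox; auto|split; [apply counit_iso1; auto|apply counit_iso2; auto]]].
    - intros; apply counit_nat; auto. }
Qed.
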